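(* Let $\ell, m$ be positive integers and $n=(\ell+1)m$. For $1\le s\le \ell+1$ put $a_s = e_{(s-1)m+1}+\cdots+e_{sm}\in E^1$. Let $K$ be a Latin $\ell$-dimensional hypercube on $[m]$. Then in $E$ \begin{align*} \partial(a_1\wedge a_2\wedge\cdots\wedge a_{\ell+1}) &= -(a_1-a_2)\wedge \partial(a_2\wedge\cdots\wedge a_{\ell+1}) \\ &= (-1)^{\ell} m\,(a_1-a_2)\wedge(a_2-a_3)\wedge\cdots\wedge(a_\ell - a_{\ell+1}) \\ &= m\sum_{S\in\mathcal{C}[K]} \partial(e_S), \end{align*} where for $S=(i_1,\ldots,i_p)$ one writes $e_S=e_{i_1}\wedge\cdots\wedge e_{i_p}$.
   Context: $R$ is a commutative ring with $1$; $E$ is the graded exterior algebra over $R$ generated by degree-one elements $e_1,\ldots,e_n$. The $R$-linear map $\partial:E^p\to E^{p-1}$ is given by $\partial 1=0$, $\partial e_i=1$, $\partial(e_{i_1}\wedge\cdots\wedge e_{i_p})=\sum_{k=1}^p(-1)^{k-1}e_{i_1}\wedge\cdots\wedge\widehat{e_{i_k}}\wedge\cdots\wedge e_{i_p}$. A Latin $\ell$-dimensional hypercube on $[m]$ is an array $K=[k(i_1,\ldots,i_\ell)]_{1\le i_1,\ldots,i_\ell\le m}$ with entries in $[m]$ such that fixing any $\ell-1$ coordinates, the $m$ entries obtained by varying the remaining one are exactly $[m]$. $\mathcal{C}[K]$ is the family of ordered tuples $(i_1, m+i_2, 2m+i_3,\ldots,(\ell-1)m+i_\ell, \ell m+k(i_1,\ldots,i_\ell))$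 for $1\le i_1,\ldots,i_\ell\le m$. *)

(* Defs.v *)
(* Exterior algebra E over a commutative ring R on generators
   e_1..e_n, modelled as the free R-module with basis e_U, U a subset of
   {1..n} (represented by {set 'I_n}, generator e_i <-> ordinal i-1),
   e_U = wedge of its elements in increasing order. *)
From HB Require Import structures.
From mathcomp Require Import all_boot all_order all_algebra.
Set Implicit Arguments. Unset Strict Implicit. Unset Printing Implicit Defensive.
Import GRing.Theory.
Local Open Scope ring_scope.

Notation ext R n := {ffun {set 'I_n} -> R}.

Section Exterior.
Variables (R : comPzRingType) (n : nat).

(* sign of the shuffle of increasing sequences S then T: (-1)^(#inversions) *)
Definition ext_sgn (S T : {set 'I_n}) : R :=
  (-1) ^+ #|[set p : 'I_n * 'I_n | (p.1 \in S) && (p.2 \in T) && (p.2 < p.1)%N]|.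

Definition wedge (x y : ext R n) : ext R n :=
  [ffun U => \sum_(S : {set 'I_n}) \sum_(T : {set 'I_n} |
      (S :|: T == U) && [disjoint S & T]) ext_sgn S T * x S * y T].

Definition ext1 : ext R n := [ffun U => (U == set0)%:R].

Definition ebasis (U : {set 'I_n}) : ext R n := [ffun V => (V == U)%:R].

(* generator e_i, 1-based: e_i for 1 <= i <= n (0 outside this range) *)
Definition gen (i : nat) : ext R n :=
  match insub i.-1 with
  | Some k => if (0 < i)%N then ebasis [set k] else 0
  | None => 0
  end.

(* the boundary map: R-linear, d(e_{i_1}..e_{i_p}) = sum_k (-1)^(k-1) e_{..hat i_k..}
   (for increasing i_1<..<i_p); coefficient of e_U in d x *)
Definition del (x : ext R n) : ext R n :=
  [ffun U : {set 'I_n} => \sum_(i : 'I_n | i \notin U)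
                (-1) ^+ #|[set j in U | (j < i)%N]| * x (i |: U)].

Definition wedge_seq (s : seq (ext R n)) : ext R n := foldr wedge ext1 s.

(* e_S for an ordered tuple S = (i_1,..,i_p) of 1-based indices *)
Definition eS (S : seq nat) : ext R n := wedge_seq (map gen S).

End Exterior.

(* Latin l-dimensional hypercube on [m]; entries and coordinates 0-based
   ('I_m stands for [m] via k <-> k+1). Fixing all coordinates except j,
   the m entries obtained are exactly [m]. *)
Definition latin (l m : nat) (K : {ffun {ffun 'I_l -> 'I_m} -> 'I_m}) : Prop :=
  forall (j : 'I_l) (t : {ffun 'I_l -> 'I_m}),
    [set K [ffun k => if k == j then x else t k] | x : 'I_m] = [set: 'I_m].

(* the tuple (i_1, m+i_2, .., (l-1)m+i_l, lm + k(i_1..i_l)) in 1-based terms *)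
Definition Ctuple (l m : nat) (K : {ffun {ffun 'I_l -> 'I_m} -> 'I_m})
    (i : {ffun 'I_l -> 'I_m}) : seq nat :=
  [seq (j * m + (i j).+1)%N | j : 'I_l <- enum 'I_l] ++ [:: (l * m + (K i).+1)%N].

(* the family C[K] (listed once for each index tuple; the map is injective) *)
Definition Cfam (l m : nat) (K : {ffun {ffun 'I_l -> 'I_m} -> 'I_m}) : seq (seq nat) :=
  [seq Ctuple K i | i <- enum {ffun 'I_l -> 'I_m}].

Definition ablock (R : comPzRingType) (n m s : nat) : ext R n :=
  \sum_(j < m) gen R n ((s.-1) * m + j.+1).

Definition escale (R : comPzRingType) (n : nat) (c : R) (x : ext R n) : ext R n :=
  [ffun U => c * x U].

(* Main.v *)
From HB Require Import structures.
Require Import Defs.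
From mathcomp Require Import all_boot all_order all_algebra ring.
Set Implicit Arguments. Unset Strict Implicit. Unset Printing Implicit Defensive.
Import GRing.Theory.
Local Open Scope ring_scope.

Section Ext.
Variables (R : comPzRingType) (n : nat).
Local Notation E := (ext R n).

Lemma del_is_zmod : zmod_morphism (@del R n).
Proof.
move=> x y; apply/ffunP => U; rewrite !ffunE -sumrB; apply: eq_bigr => i _.
by rewrite !ffunE mulrBr.
Qed.
HB.instance Definition _ := GRing.isZmodMorphism.Build E E (@del R n) del_is_zmod.

Lemma wedge_is_zmod (x : E) : zmod_morphism (@wedge R n x).
Proof.
move=> y z; apply/ffunP => U; rewrite !ffunE -sumrB; apply: eq_bigr => S _.
rewrite -sumrB; apply: eq_bigr => T _.
by rewrite !ffunE mulrBr.
Qed.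
HB.instance Definition _ (x : E) :=
  GRing.isZmodMorphism.Build E E (@wedge R n x) (wedge_is_zmod x).

Definition wedger (y : E) (x : E) := wedge x y.
Lemma wedger_is_zmod (y : E) : zmod_morphism (wedger y).
Proof.
move=> x z; apply/ffunP => U; rewrite !ffunE -sumrB; apply: eq_bigr => S _.
rewrite -sumrB; apply: eq_bigr => T _.
by rewrite !ffunE mulrBr mulrBl.
Qed.
HB.instance Definition _ (y : E) :=
  GRing.isZmodMorphism.Build E E (wedger y) (wedger_is_zmod y).

Lemma wedge_suml I (r : seq I) (P : pred I) (F : I -> E) (y : E) :
  wedge (\sum_(i <- r | P i) F i) y = \sum_(i <- r | P i) wedge (F i) y.
Proof. exact: (raddf_sum (wedger y)). Qed.
Lemma wedgeBl (x z y : E) : wedge (x - z) y = wedge x y - wedge z y.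
Proof. exact: (raddfB (wedger y)). Qed.
Lemma wedgeMnl (x y : E) k : wedge (x *+ k) y = wedge x y *+ k.
Proof. exact: (raddfMn (wedger y)). Qed.

Lemma del_ext1 : del (ext1 R n) = 0.
Proof.
apply/ffunP => U; rewrite !ffunE big1 // => i _.
rewrite ffunE.
have -> : (i |: U == set0) = false.
  by apply/negbTE/set0Pn; exists i; rewrite setU11.
by rewrite mulr0.
Qed.

Definition cnt (U : {set 'I_n}) (k : 'I_n) := #|[set x in U | (x < k)%N]|.

Lemma cntD1 (U : {set 'I_n}) i k : i \in U -> cnt U k = ((i < k)%N + cnt (U :\ i) k)%N.
Proof.
move=> iU; rewrite /cnt (cardsD1 i) inE iU /=; congr (_ + _)%N.
by apply: eq_card => x; rewrite !inE andbA.
Qed.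

Lemma cntU1 (U : {set 'I_n}) i k : i \notin U -> cnt (i |: U) k = ((i < k)%N + cnt U k)%N.
Proof. by move=> iU; rewrite (cntD1 k (setU11 i U)) setU1K. Qed.

Definition Lg (k : 'I_n) (y : E) : E :=
  [ffun U : {set 'I_n} => if k \in U then (-1) ^+ cnt U k * y (U :\ k) else 0].

Lemma wedge_ebasis1 (k : 'I_n) (y : E) : wedge (ebasis R [set k]) y = Lg k y.
Proof.
apply/ffunP => U; rewrite !ffunE (bigD1 [set k]) //=.
rewrite [X in _ + X]big1 ?addr0; last first.
  by move=> S SK; rewrite big1 // => T _; rewrite ffunE (negbTE SK) mulr0 mul0r.
rewrite ffunE eqxx.
case: ifP => kU.
  rewrite (bigD1 (U :\ k)) /=; last by rewrite setD1K // disjoints1 setD11 eqxx.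
  rewrite big1 ?addr0; last first.
    move=> T /andP[/andP[/eqP <- ]]; rewrite disjoints1 => kT.
    by rewrite setU1K // eqxx.
  rewrite mulr1; congr (_ * _); rewrite /ext_sgn /cnt; congr (_ ^+ _).
  have pinj : injective (fun b : 'I_n => (k, b)) by move=> a b [].
  rewrite -(card_imset _ pinj).
  apply: eq_card => -[a b]; rewrite !inE /=.
  apply/idP/imsetP.
    case/andP=> /andP[/eqP -> /andP[bk bU]] ba; exists b => //.
    by rewrite inE bU.
  case=> b'; rewrite inE => /andP[bU bk] [-> ->]; rewrite eqxx bU bk andbT /=.
  by rewrite neq_ltn bk.
rewrite big1 // => T /andP[/eqP TU _].
by move: kU; rewrite -TU setU11.
Qed.

Lemma LgLg (k : 'I_n) (y : E) : Lg k (Lg k y) = 0.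
Proof.
apply/ffunP => U; rewrite !ffunE; case: ifP => // kU.
by rewrite setD11 mulr0.
Qed.

Lemma LgC_lt (i j : 'I_n) (y : E) : (i < j)%N -> Lg i (Lg j y) = - Lg j (Lg i y).
Proof.
move=> ij; apply/ffunP => U; rewrite !ffunE !in_setD1.
have ji : (j != i) by rewrite neq_ltn ij orbT.
have ij' : (i != j) by rewrite eq_sym.
rewrite ji ij' /=.
case iU: (i \in U); case jU: (j \in U); rewrite /= ?mulr0 ?oppr0 //.
rewrite (cntD1 j iU) ij.
rewrite (cntD1 i jU) ltnNge (ltnW ij) /= add0n.
have -> : U :\ j :\ i = U :\ i :\ j by apply/setP => x; rewrite !inE; case: (x == i); case: (x == j).
rewrite exprD expr1; ring.
Qed.

Lemma LgC (i j : 'I_n) (y : E) : Lg i (Lg j y) = - Lg j (Lg i y).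
Proof.
case: (ltngtP i j) => [ij|ji|/val_inj ->]; first exact: LgC_lt.
  by rewrite (@LgC_lt j i y ji) opprK.
by rewrite LgLg oppr0.
Qed.

Lemma del_Lg (k : 'I_n) (y : E) : del (Lg k y) = y - Lg k (del y).
Proof.
apply/ffunP => U; rewrite !ffunE.
case: ifP => kU.
  rewrite [in RHS](bigD1 k) /=; last by rewrite setD11.
  have ck : cnt (U :\ k) k = cnt U k by rewrite (cntD1 k kU) ltnn.
  rewrite setD1K // -/(cnt (U :\ k) k) ck mulrDr opprD addrA signrMK.
  rewrite subrr add0r.
  rewrite mulr_sumr -sumrN.
  rewrite [RHS](eq_bigl (fun i => i \notin U)); last first.
    by move=> i; rewrite !inE; case: (i =P k) => [->|_] /=; [rewrite kU | rewrite andbT].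
  apply: eq_bigr => i iU.
  have ik : i != k by apply: contraNneq iU => ->.
  rewrite ?ffunE in_setU1 kU orbT.
  have -> : (i |: U) :\ k = i |: (U :\ k).
    apply/setP => x; rewrite !inE; case: (x =P k) => [->|] /=.
      by rewrite eq_sym (negbTE ik).
    by case: (x == i).
  rewrite -/(cnt U i) -/(cnt (U :\ k) i) (cntU1 k iU) (cntD1 i kU).
  have : ((i < k)%N + (k < i)%N = 1)%N by case: (ltngtP i k) => // /val_inj /eqP; rewrite (negbTE ik).
  rewrite !exprD => h.
  have : (-1) ^+ (i < k)%N * (-1) ^+ (k < i)%N = - 1 :> R by rewrite -exprD h expr1.
  move=> h2.
  transitivity (((-1) ^+ (i < k)%N * (-1) ^+ (k < i)%N) * ((-1) ^+ cnt (U :\ k) i * (-1) ^+ cnt U k * y (i |: U :\ k))).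
    by ring.
  rewrite h2; ring.
have kU' : k \notin U by rewrite kU.
rewrite subr0 (bigD1 k) //=.
rewrite {1}/Lg ffunE setU11 -/(cnt U k) (cntU1 k kU') ltnn add0n setU1K // signrMK.
rewrite big1 ?addr0 // => i /andP[iU ik].
by rewrite /Lg ffunE in_setU1 kU orbF eq_sym (negbTE ik) mulr0.
Qed.

Lemma gen_ord (i : nat) (hi : (i < n)%N) : gen R n i.+1 = ebasis R [set Ordinal hi].
Proof.
rewrite /gen /=.
have -> : insub i = Some (Ordinal hi) by rewrite insubT.
done.
Qed.

Lemma wedge_gen (i : nat) (hi : (i < n)%N) (y : E) :
  wedge (gen R n i.+1) y = Lg (Ordinal hi) y.
Proof. by rewrite gen_ord wedge_ebasis1. Qed.

Lemma del_wgen (i : nat) (y : E) : (i < n)%N ->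
  del (wedge (gen R n i.+1) y) = y - wedge (gen R n i.+1) (del y).
Proof. by move=> hi; rewrite !(wedge_gen hi) del_Lg. Qed.

Lemma wgenC (i j : nat) (y : E) : (i < n)%N -> (j < n)%N ->
  wedge (gen R n i.+1) (wedge (gen R n j.+1) y)
  = - wedge (gen R n j.+1) (wedge (gen R n i.+1) y).
Proof. by move=> hi hj; rewrite !(wedge_gen hi) !(wedge_gen hj) LgC. Qed.

Lemma wgen2 (i : nat) (y : E) : (i < n)%N ->
  wedge (gen R n i.+1) (wedge (gen R n i.+1) y) = 0.
Proof. by move=> hi; rewrite !(wedge_gen hi) LgLg. Qed.

Lemma pairing (V : zmodType) (m : nat) (X : nat -> nat -> V) :
  (forall i j, (i < m)%N -> (j < m)%N -> X i j = - X j i) ->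
  (forall i, (i < m)%N -> X i i = 0) ->
  \sum_(i < m) \sum_(j < m) X i j = 0.
Proof.
elim: m => [|m IH] HA HD; first by rewrite big_ord0.
rewrite big_ord_recr /= big_ord_recr /= HD //.
rewrite (eq_bigr (fun i : 'I_m => \sum_(j < m) X i j + X i m)); last first.
  by move=> i _; rewrite big_ord_recr.
rewrite big_split /= IH; last 2 first.
- by move=> i j hi hj; apply: HA; apply: ltnW.
- by move=> i hi; apply: HD; apply: ltnW.
rewrite add0r addr0 -big_split /= big1 // => i _.
by rewrite (HA i m (ltnW (ltn_ord i)) (ltnSn m)) addNr.
Qed.

Definition blk (b m : nat) : E := \sum_(j < m) gen R n (b + j).+1.

Lemma del_wblk b m (y : E) : (b + m <= n)%N ->
  del (wedge (blk b m) y) = y *+ m - wedge (blk b m) (del y).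
Proof.
move=> hb; rewrite /blk !wedge_suml raddf_sum.
rewrite (eq_bigr (fun j : 'I_m => y - wedge (gen R n (b + j).+1) (del y))).
  by rewrite sumrB sumr_const card_ord.
move=> j _; apply: del_wgen.
by apply: (leq_trans _ hb); rewrite ltn_add2l.
Qed.

Lemma wblk2 b m (y : E) : (b + m <= n)%N ->
  wedge (blk b m) (wedge (blk b m) y) = 0.
Proof.
move=> hb; rewrite /blk wedge_suml.
rewrite (eq_bigr (fun i : 'I_m => \sum_(j < m)
   wedge (gen R n (b + i).+1) (wedge (gen R n (b + j).+1) y))); last first.
  by move=> i _; rewrite wedge_suml raddf_sum.
apply: (pairing (X := fun i j => wedge (gen R n (b + i).+1) (wedge (gen R n (b + j).+1) y))).
  move=> i j hi hj; apply: wgenC.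
    by apply: (leq_trans _ hb); rewrite ltn_add2l.
  by apply: (leq_trans _ hb); rewrite ltn_add2l.
move=> i hi; apply: wgen2.
by apply: (leq_trans _ hb); rewrite ltn_add2l.
Qed.

Lemma Glem (u w Y : E) c :
  (forall y, del (wedge u y) = y *+ c - wedge u (del y)) ->
  (forall y, del (wedge w y) = y *+ c - wedge w (del y)) ->
  (forall y, wedge w (wedge w y) = 0) ->
  del (wedge u (wedge w Y)) = - wedge (u - w) (del (wedge w Y)).
Proof.
move=> Hu Hw Hww.
rewrite Hu Hw wedgeBl !raddfB /= !raddfMn /= Hww. by rewrite !opprK !oppr0 ?subr0 ?addr0 addrC.
Qed.

Lemma del_wseq p (F : 'I_p.+1 -> E) (c : 'I_p.+1 -> nat) :
  (forall k y, del (wedge (F k) y) = y *+ c k - wedge (F k) (del y)) ->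
  del (wedge_seq [seq F i | i <- enum 'I_p.+1]) =
  \sum_(k < p.+1) (wedge_seq [seq F (lift k t) | t <- enum 'I_p] *+ c k) *~ ((-1) ^+ k).
Proof.
elim: p F c => [|p IH] F c HF.
  rewrite enum_ordSl enum_ord0 /= big_ord1 /= HF del_ext1 raddf0 subr0.
  by rewrite expr0 mulr1z.
have -> : [seq F i | i <- enum 'I_p.+2] = F ord0 :: [seq F (lift ord0 i) | i <- enum 'I_p.+1].
  by rewrite enum_ordSl /= -map_comp.
rewrite /= HF.
rewrite (IH (fun i => F (lift ord0 i)) (fun i => c (lift ord0 i))); last first.
  by move=> k y; apply: HF.
rewrite [RHS]big_ord_recl /= expr0 mulr1z.
congr (_ + _).
rewrite raddf_sum /= -sumrN; apply: eq_bigr => k _.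
have -> : [seq F (lift (lift ord0 k) t) | t <- enum 'I_p.+1]
  = F ord0 :: [seq F (lift ord0 (lift k t)) | t <- enum 'I_p].
  rewrite enum_ordSl /= -map_comp; congr (F _ :: _).
    by apply: val_inj.
  apply: eq_map => t /=; congr F; apply: val_inj => /=.
  by rewrite /bump !leq0n /= !add1n ltnS addnS.
rewrite /= raddfMz raddfMn /= /bump leq0n add1n exprS mulN1r mulrNz.
done.
Qed.

Definition consf p m (j : 'I_m) (h : {ffun 'I_p -> 'I_m}) : {ffun 'I_p.+1 -> 'I_m} :=
  [ffun i => if unlift ord0 i is Some i' then h i' else j].

Lemma expand p m (G : 'I_p -> 'I_m -> E) :
  wedge_seq [seq \sum_(j < m) G s j | s <- enum 'I_p] =
  \sum_(g : {ffun 'I_p -> 'I_m}) wedge_seq [seq G s (g s) | s <- enum 'I_p].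
Proof.
elim: p G => [|p IH] G.
  by rewrite enum_ord0 /= sumr_const card_ffun !card_ord expn0.
have -> : [seq \sum_(j < m) G s j | s <- enum 'I_p.+1] =
   \sum_(j < m) G ord0 j :: [seq \sum_(j < m) G (lift ord0 s) j | s <- enum 'I_p].
  by rewrite enum_ordSl /= -map_comp.
rewrite /= (IH (fun s => G (lift ord0 s))) wedge_suml.
rewrite (eq_bigr (fun j => \sum_(h : {ffun 'I_p -> 'I_m})
   wedge (G ord0 j) (wedge_seq [seq G (lift ord0 s) (h s) | s <- enum 'I_p]))); last first.
  by move=> j _; rewrite raddf_sum.
rewrite pair_big /=.
rewrite (reindex (fun jh : 'I_m * {ffun 'I_p -> 'I_m} => consf jh.1 jh.2)) /=; last first.
  apply: onW_bij; exists (fun g : {ffun 'I_p.+1 -> 'I_m} => (g ord0, [ffun s => g (lift ord0 s)])).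
    move=> [j h] /=; rewrite /consf ffunE unlift_none; congr (_, _).
    by apply/ffunP => s; rewrite !ffunE liftK.
  move=> g; apply/ffunP => i; rewrite /consf !ffunE.
  by case: unliftP => [i' ->|->]; rewrite ?ffunE.
apply: eq_bigr => -[j h] _ /=.
rewrite enum_ordSl /= -map_comp /consf ffunE unlift_none; congr (wedge _ (wedge_seq _)).
by apply: eq_map => s /=; rewrite ffunE liftK.
Qed.

End Ext.

Definition fi (l m : nat) (K : {ffun {ffun 'I_l -> 'I_m} -> 'I_m})
  (i : {ffun 'I_l -> 'I_m}) (s : 'I_l.+1) : 'I_m :=
  if insub (val s) is Some s' then i s' else K i.

Lemma fiw l m K i (x : 'I_l) : @fi l m K i (widen_ord (leqnSn l) x) = i x.
Proof. by rewrite /fi /= valK. Qed.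

Lemma fim l m K i : @fi l m K i ord_max = K i.
Proof. by rewrite /fi /= insubF // ltnn. Qed.

Lemma phi_inj l m K (HK : latin K) (k : 'I_l.+1) :
  injective (fun i : {ffun 'I_l -> 'I_m} => [ffun t => @fi l m K i (lift k t)]).
Proof.
move=> i1 i2 /ffunP H.
have H' : forall s : 'I_l.+1, s != k -> fi K i1 s = fi K i2 s.
  move=> s sk; case: (unliftP k s) => [t ->|e].
    by have := H t; rewrite !ffunE.
  by rewrite e eqxx in sk.
case: (ltnP k l) => kl; last first.
  apply/ffunP => x; rewrite -(fiw K i1) -(fiw K i2); apply: H'.
  apply/negP => /eqP /(congr1 val) /= e.
  by move: (ltn_ord x); rewrite e ltnNge kl.
set k' : 'I_l := Ordinal kl.
have agree : forall x : 'I_l, x != k' -> i1 x = i2 x.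
  move=> x xk; rewrite -(fiw K i1) -(fiw K i2); apply: H'.
  apply: contra xk => /eqP /(congr1 val) /= e; apply/eqP/val_inj.
  by rewrite /= e.
have KK : K i1 = K i2.
  rewrite -(fim K i1) -(fim K i2); apply: H'.
  apply/negP => /eqP /(congr1 val) /= e.
  by move: (kl); rewrite -e ltnn.
have inj : injective (fun x => K [ffun j => if j == k' then x else i1 j]).
  have := HK k' i1.
  move=> /(congr1 (fun A : {set 'I_m} => #|A|)); rewrite cardsT => hc.
  have /imset_injP hi : #|[set K [ffun j => if j == k' then x else i1 j] | x : 'I_m]| == #|'I_m|.
    by rewrite hc.
  by move=> x y; apply: hi.
have e1 : i1 = [ffun j => if j == k' then i1 k' else i1 j].
  by apply/ffunP => j; rewrite ffunE; case: eqP => // ->.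
have e2 : i2 = [ffun j => if j == k' then i2 k' else i1 j].
  apply/ffunP => j; rewrite ffunE; case: eqP => [-> //| /eqP jk].
  by rewrite agree.
have ik : i1 k' = i2 k' by apply: inj; rewrite /= -e1 -e2.
apply/ffunP => x; case: (x =P k') => [-> //| /eqP xk]; exact: agree.
Qed.

Lemma escale_z (R : comPzRingType) n (z : int) (x : ext R n) : escale z%:~R x = x *~ z.
Proof. by apply/ffunP => U; rewrite !ffunE ffunMzE mulrzl. Qed.

Lemma escale_n (R : comPzRingType) n (k : nat) (x : ext R n) : escale k%:R x = x *+ k.
Proof. by apply/ffunP => U; rewrite !ffunE ffunMnE mulr_natl. Qed.

Unset Implicit Arguments.
Set Strict Implicit.

Theorem lemma2p3 (R : comPzRingType) (l m : nat) (hl : (0 < l)%N) (hm : (0 < m)%N)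
  (K : {ffun {ffun 'I_l -> 'I_m} -> 'I_m}) (HK : latin K) :
  let n := (l.+1 * m)%N in
  let a := ablock R n m in
  let A := wedge_seq [seq a s | s <- iota 1 l.+1] in
  del A = - wedge (a 1%N - a 2%N) (del (wedge_seq [seq a s | s <- iota 2 l]))
  /\ del A = escale ((-1) ^+ l * m%:R) (wedge_seq [seq a s - a s.+1 | s <- iota 1 l])
  /\ del A = escale m%:R (\sum_(S <- Cfam K) del (eS R n S)).
Proof.
move=> n a A.
have ha : forall s, a s = blk R n (s.-1 * m) m.
  by move=> s; rewrite /a /ablock /blk; apply: eq_bigr => j _; rewrite addnS.
have hb : forall s, (s <= l.+1)%N -> (s.-1 * m + m <= n)%N.
  move=> s hs; rewrite addnC -mulSn /n leq_mul2r; apply/orP; right.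
  by case: s hs.
have Da : forall s y, (s <= l.+1)%N -> del (wedge (a s) y) = y *+ m - wedge (a s) (del y).
  by move=> s y hs; rewrite ha del_wblk // hb.
have Aa : forall s y, (s <= l.+1)%N -> wedge (a s) (wedge (a s) y) = 0.
  by move=> s y hs; rewrite ha wblk2 // hb.
have C2 : forall k s, (1 <= s)%N -> (s + k <= l.+1)%N ->
    del (wedge_seq [seq a t | t <- iota s k.+1])
    = (wedge_seq [seq a t - a t.+1 | t <- iota s k]) *~ ((-1) ^+ k * m%:Z).
  elim=> [|k IH] s hs hsk.
    rewrite /= Da; last by rewrite addn0 in hsk; apply: (leq_trans hsk).
    by rewrite del_ext1 raddf0 subr0 expr0 mul1r pmulrn.
  rewrite [iota _ _]/= [wedge_seq _]/=.
  rewrite (@Glem R n _ _ _ m); first last.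
  - by move=> y; apply: Aa; apply: leq_trans hsk; rewrite -addSnnS leq_addr.
  - by move=> y; apply: Da; apply: leq_trans hsk; rewrite -addSnnS leq_addr.
  - by move=> y; apply: Da; apply: leq_trans hsk; rewrite leq_addr.
  have -> : wedge (a s.+1) (wedge_seq [seq a t | t <- iota s.+2 k])
      = wedge_seq [seq a t | t <- iota s.+1 k.+1] by [].
  rewrite IH //; last by rewrite addSnnS.
  by rewrite raddfMz /= exprS mulN1r mulNr mulrNz.
split.
  rewrite /A.
  case: l hl K HK n a A ha hb Da Aa C2 => // l' _ K HK n a A ha hb Da Aa C2.
  rewrite [iota 1 _]/= [iota 2 _]/= /=.
  apply: (@Glem R n _ _ _ m).
  - by move=> y; apply: Da.
  - by move=> y; apply: Da.
  - by move=> y; apply: Aa.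
split.
  rewrite /A C2 //.
  rewrite -escale_z; congr escale.
  by rewrite intrM intr_sign.
rewrite /A.
have -> : [seq a s | s <- iota 1 l.+1] = [seq a (val i).+1 | i <- enum 'I_l.+1].
  have -> : iota 1 l.+1 = map (addn 1) (iota 0 l.+1) by rewrite -iotaDl.
  by rewrite -val_enum_ord -!map_comp; apply: eq_map => i /=; rewrite add1n.
rewrite (@del_wseq R n l (fun i => a (val i).+1) (fun _ => m)); last first.
  by move=> k y; apply: Da; apply: ltn_ord.
rewrite escale_n /Cfam big_map.
have hidx : forall (s : 'I_l.+1) (j : 'I_m), (s * m + j < n)%N.
  move=> s j; apply: (@leq_trans (s * m + m)); first by rewrite ltn_add2l.
  by rewrite addnC -mulSn /n leq_mul2r ltn_ord orbT.
have hE : forall i, eS R n (Ctuple K i) =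
    wedge_seq [seq gen R n ((val s) * m + fi K i s).+1 | s <- enum 'I_l.+1].
  move=> i; rewrite /eS /Ctuple enum_ordSr map_rcons -cats1 map_cat.
  congr (wedge_seq (_ ++ _)).
    by rewrite -!map_comp; apply: eq_map => x /=; rewrite fiw addnS.
  by rewrite /= fim addnS.
rewrite (eq_bigr (fun i => \sum_(k < l.+1)
   (wedge_seq [seq gen R n ((val (lift k t)) * m + fi K i (lift k t)).+1 | t <- enum 'I_l] *+ 1)
     *~ ((-1) ^+ k))); last first.
  move=> i _; rewrite hE.
  rewrite (@del_wseq R n l (fun s => gen R n ((val s) * m + fi K i s).+1) (fun _ => 1%N)) //.
  by move=> k y; rewrite del_wgen ?mulr1n //; apply: hidx.
rewrite exchange_big -sumrMnl; apply: eq_bigr => k _.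
rewrite -mulrz_suml.
suff -> : \sum_(i <- enum {ffun 'I_l -> 'I_m})
    wedge_seq [seq gen R n ((val (lift k t)) * m + fi K i (lift k t)).+1 | t <- enum 'I_l] *+ 1
    = wedge_seq [seq a (val (lift k t)).+1 | t <- enum 'I_l].
  by rewrite !pmulrn -!mulrzA mulrC.
have -> : [seq a (val (lift k t)).+1 | t <- enum 'I_l] =
    [seq \sum_(j < m) gen R n ((val (lift k t)) * m + j).+1 | t <- enum 'I_l].
  by apply: eq_map => t; rewrite /a /ablock; apply: eq_bigr => j _; rewrite addnS.
rewrite (expand (fun t (j : 'I_m) => gen R n ((val (lift k t)) * m + j).+1)).
rewrite (reindex_inj (@phi_inj l m K HK k)) /=.
rewrite big_enum /=.
apply: eq_big => [i|i _] //.
rewrite mulr1n; congr wedge_seq; apply: eq_map => t.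
by rewrite ffunE.
Qed.
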